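(* Let $w \in S_n$, and form a table $\mathcal{T}(w)$ whose rows are indexed by the braid classes of $w$ and whose columns are indexed by the commutation classes of $w$, placing each reduced word $\mathbf{u}\in R(w)$ in the cell whose row is the braid class containing $\mathbf{u}$ and whose column is the commutation class containing $\mathbf{u}$. Then each cell of $\mathcal{T}(w)$ contains at most one reduced word; equivalently, every braid class and every commutation class of $w$ intersect in at most one element.
   Context: $S_n$ is generated by the adjacent transpositions $s_1,\dots,s_{n-1}$. A reduced word for $w$ is a word $i_1\cdots i_k$ with $w=s_{i_1}\cdots s_{i_k}$ and $k$ minimal; $R(w)$ is the set of reduced words. A braid move replaces a factor (consecutive letters) $i(i+1)i$ by $(i+1)i(i+1)$ or vice versa; a commutation move replaces a factor $ij$ with $|i-j|>1$ by $ji$. Braid classes (resp. commutation classes) of $w$ are the equivalence classes of $R(w)$ under sequences of braid moves (resp. commutation moves). *)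

(* Defs.v *)
From mathcomp Require Import all_boot all_order all_fingroup.
From Stdlib Require Import Relations.
Set Implicit Arguments. Unset Strict Implicit. Unset Printing Implicit Defensive.

(* Adjacent transposition s_i (1 <= i <= n-1), swapping positions i-1 and i of
   'I_n (0-indexed, i.e. the values i and i+1 in 1-indexed notation).
   Out-of-range letters are never used in reduced words (see [word_ok]). *)
Definition adj_transp (n : nat) (i : nat) : 'S_n :=
  match insub i.-1, insub i with
  | Some a, Some b => tperm a b
  | _, _ => 1%g
  end.

Definition word_ok (n : nat) (u : seq nat) : bool :=
  all (fun i => (0 < i) && (i < n)) u.

Definition word_prod (n : nat) (u : seq nat) : 'S_n :=
  \prod_(i <- u) adj_transp n i.

Definition reduced_word (n : nat) (w : 'S_n) (u : seq nat) : Prop :=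
  word_ok n u /\ word_prod n u = w /\
  forall v : seq nat, word_ok n v -> word_prod n v = w -> size u <= size v.

Definition braid_move (u v : seq nat) : Prop :=
  exists (x y : seq nat) (i : nat),
    (u = x ++ [:: i; i.+1; i] ++ y /\ v = x ++ [:: i.+1; i; i.+1] ++ y) \/
    (u = x ++ [:: i.+1; i; i.+1] ++ y /\ v = x ++ [:: i; i.+1; i] ++ y).

Definition comm_move (u v : seq nat) : Prop :=
  exists (x y : seq nat) (i j : nat),
    ((i.+1 < j) || (j.+1 < i)) /\
    u = x ++ [:: i; j] ++ y /\ v = x ++ [:: j; i] ++ y.

Definition braid_equiv : relation (seq nat) := clos_refl_trans _ braid_move.
Definition comm_equiv : relation (seq nat) := clos_refl_trans _ comm_move.

(* Main.v *)
Require Import Defs.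
From mathcomp Require Import all_boot all_order all_fingroup.
From Stdlib Require Import Relations.
From mathcomp Require Import zify.

Set Implicit Arguments. Unset Strict Implicit. Unset Printing Implicit Defensive.

(* Wiring-diagram invariant: track which pair of wires each letter crosses. *)
Definition swp (s : nat -> nat) (i : nat) : nat -> nat :=
  fun z => if z == i then s i.+1 else if z == i.+1 then s i else s z.

Fixpoint pseq (s : nat -> nat) (u : seq nat) : seq (nat * nat) :=
  if u is i :: u' then (s i, s i.+1) :: pseq (swp s i) u' else [::].

Definition fin (s : nat -> nat) (u : seq nat) := foldl swp s u.

Definition PP (a b : nat * nat) :=
  [|| a.1 == b.1, a.1 == b.2, a.2 == b.1 | a.2 == b.2].

Definition proj (p q : nat * nat) (s : seq (nat * nat)) :=
  filter (fun z => (z == p) || (z == q)) s.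

Lemma swp_ext s1 s2 i : s1 =1 s2 -> swp s1 i =1 swp s2 i.
Proof. by move=> h z; rewrite /swp !h. Qed.

Lemma pseq_ext s1 s2 u : s1 =1 s2 -> pseq s1 u = pseq s2 u.
Proof.
elim: u s1 s2 => [|i u IH] s1 s2 h //=.
by rewrite !h (IH _ _ (swp_ext i h)).
Qed.

Lemma pseq_cat s x y : pseq s (x ++ y) = pseq s x ++ pseq (fin s x) y.
Proof. by elim: x s => [|i x IH] s //=; rewrite IH. Qed.

Lemma swp_inj s i : injective s -> injective (swp s i).
Proof.
move=> inj a b; rewrite /swp.
repeat (case: eqP => ?); move/inj => ?; lia.
Qed.

Lemma fin_inj s u : injective s -> injective (fin s u).
Proof. by elim: u s => [|i u IH] s h //=; apply: IH; apply: swp_inj. Qed.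

Lemma pseq_inj s u v : injective s -> pseq s u = pseq s v -> u = v.
Proof.
elim: u s v => [|i u IH] s [|j v] h //= [] /h -> _ e.
by rewrite (IH _ _ (@swp_inj s j h) e).
Qed.

Lemma proj_det (s t : seq (nat * nat)) :
  (forall p q, proj p q s = proj p q t) -> s = t.
Proof.
elim: s t => [|a s IH] [|b t] H //.
- by have := H b b; rewrite /proj /= eqxx.
- by have := H a a; rewrite /proj /= eqxx.
have := H a b; rewrite /proj /= !eqxx orbT /= => -[eab].
subst b => _; f_equal; apply: IH => p q.
have := H p q; rewrite /proj /=; case: ifP => // _ [] //.
Qed.

Lemma PP_refl a : PP a a.
Proof. by rewrite /PP eqxx. Qed.

Lemma key_braid p q x y : ~~ PP p q -> PP x y -> PP y x ->
  (x == p) || (x == q) -> (y == p) || (y == q) -> x = y.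
Proof.
move=> npq pxy pyx.
case/orP=> /eqP ex; case/orP=> /eqP ey; subst x y => //.
- by rewrite pxy in npq.
- by rewrite pyx in npq.
Qed.

Lemma key_comm p q x y : PP p q -> ~~ PP x y -> ~~ PP y x ->
  (x == p) || (x == q) -> (y == p) || (y == q) -> False.
Proof.
move=> pq pxy pyx.
case/orP=> /eqP ex; case/orP=> /eqP ey; subst x y.
- by rewrite PP_refl in pxy.
- by rewrite pq in pxy.
- by rewrite pq in pyx.
- by rewrite PP_refl in pxy.
Qed.

Lemma filter3 (T : eqType) (f : pred T) a b c :
  (f a -> f b -> a = b) -> (f a -> f c -> a = c) -> (f b -> f c -> b = c) ->
  filter f [:: a; b; c] = filter f [:: c; b; a].
Proof.
rewrite /=; case fa: (f a); case fb: (f b); case fc: (f c) => //= h1 h2 h3.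
- by rewrite (h1 erefl erefl) (h3 erefl erefl).
- by rewrite (h1 erefl erefl).
- by rewrite (h2 erefl erefl).
- by rewrite (h3 erefl erefl).
Qed.

Lemma swp_other s i z : z != i -> z != i.+1 -> swp s i z = s z.
Proof. by rewrite /swp => /negbTE -> /negbTE ->. Qed.

Lemma comm_inv u v p q : comm_move u v -> PP p q ->
  proj p q (pseq id u) = proj p q (pseq id v).
Proof.
move=> [x [y [i [j [hij [-> ->]]]]]] pq.
rewrite [pseq _ (x ++ _)]pseq_cat [pseq _ (x ++ _)]pseq_cat /proj !filter_cat; congr (_ ++ _).
have inj0 : injective (fin id x) by apply: fin_inj.
set s0 := fin id x in inj0 *.
have e1 : pseq s0 ([:: i; j] ++ y) =
    [:: (s0 i, s0 i.+1); (s0 j, s0 j.+1)] ++ pseq (swp (swp s0 i) j) y.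
  by rewrite /= !swp_other //; apply/eqP; lia.
have e2 : pseq s0 ([:: j; i] ++ y) =
    [:: (s0 j, s0 j.+1); (s0 i, s0 i.+1)] ++ pseq (swp (swp s0 j) i) y.
  by rewrite /= !swp_other //; apply/eqP; lia.
rewrite e1 e2 !filter_cat.
rewrite (@pseq_ext (swp (swp s0 i) j) (swp (swp s0 j) i)); last first.
  move=> z; rewrite /swp.
  repeat (case: eqP => ?); lia.
congr (_ ++ _).
have nP : forall k l, k != l -> k.+1 != l -> k != l.+1 -> ~~ PP (s0 k, s0 k.+1) (s0 l, s0 l.+1).
  move=> k l h1 h2 h3; rewrite /PP /= !(inj_eq inj0).
  rewrite (negbTE h1) (negbTE h2) (negbTE h3) /=.
  by apply/eqP; lia.
have h1 : ~~ PP (s0 i, s0 i.+1) (s0 j, s0 j.+1) by apply: nP; apply/eqP; lia.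
have h2 : ~~ PP (s0 j, s0 j.+1) (s0 i, s0 i.+1) by apply: nP; apply/eqP; lia.
rewrite /=.
case fa: (_ || _); case fb: (_ || _) => //=.
by case: (key_comm pq h1 h2 fa fb).
Qed.

Lemma swp_l s i : swp s i i = s i.+1.
Proof. by rewrite /swp eqxx. Qed.
Lemma swp_r s i : swp s i i.+1 = s i.
Proof. by rewrite /swp eqxx; case: eqP => // h; lia. Qed.
Lemma swp_S2 s i : swp s i i.+2 = s i.+2.
Proof. by rewrite swp_other //; apply/eqP; lia. Qed.
Lemma swp_Sl s i : swp s i.+1 i = s i.
Proof. by rewrite swp_other //; apply/eqP; lia. Qed.

Lemma braid_inv1 x y i p q : ~~ PP p q ->
  proj p q (pseq id (x ++ [:: i; i.+1; i] ++ y)) =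
  proj p q (pseq id (x ++ [:: i.+1; i; i.+1] ++ y)).
Proof.
move=> npq.
rewrite [pseq _ (x ++ _)]pseq_cat [pseq _ (x ++ _)]pseq_cat /proj !filter_cat; congr (_ ++ _).
set s0 := fin id x.
have e1 : pseq s0 ([:: i; i.+1; i] ++ y) =
   [:: (s0 i, s0 i.+1); (s0 i, s0 i.+2); (s0 i.+1, s0 i.+2)] ++
   pseq (swp (swp (swp s0 i) i.+1) i) y.
  by rewrite /= ?(swp_l, swp_r, swp_S2, swp_Sl).
have e2 : pseq s0 ([:: i.+1; i; i.+1] ++ y) =
   [:: (s0 i.+1, s0 i.+2); (s0 i, s0 i.+2); (s0 i, s0 i.+1)] ++
   pseq (swp (swp (swp s0 i.+1) i) i.+1) y.
  by rewrite /= ?(swp_l, swp_r, swp_S2, swp_Sl).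
rewrite e1 e2 !filter_cat.
rewrite (@pseq_ext (swp (swp (swp s0 i) i.+1) i) (swp (swp (swp s0 i.+1) i) i.+1)); last first.
  move=> z; rewrite /swp.
  repeat (case: eqP => ?); lia.
congr (_ ++ _).
apply: filter3 => h1 h2; apply: (key_braid npq) h1 h2;
  by rewrite /PP /= !eqxx ?orbT.
Qed.

Lemma braid_inv u v p q : braid_move u v -> ~~ PP p q ->
  proj p q (pseq id u) = proj p q (pseq id v).
Proof.
move=> [x [y [i [[-> ->]|[-> ->]]]]] npq; first exact: braid_inv1.
by rewrite braid_inv1.
Qed.

Lemma comm_equiv_inv u v p q : comm_equiv u v -> PP p q ->
  proj p q (pseq id u) = proj p q (pseq id v).
Proof.
move=> H pq; induction H as [u v h| u | u v w _ IH1 _ IH2] => //.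
- exact: comm_inv.
- by rewrite IH1.
Qed.

Lemma braid_equiv_inv u v p q : braid_equiv u v -> ~~ PP p q ->
  proj p q (pseq id u) = proj p q (pseq id v).
Proof.
move=> H pq; induction H as [u v h| u | u v w _ IH1 _ IH2] => //.
- exact: braid_inv.
- by rewrite IH1.
Qed.

Theorem corollary4p3 (n : nat) (w : 'S_n) (u v : seq nat) :
  reduced_word w u -> reduced_word w v ->
  braid_equiv u v -> comm_equiv u v -> u = v.
Proof.
move=> _ _ hb hc.
apply: (@pseq_inj id) => //.
apply: proj_det => p q.
case: (boolP (PP p q)) => h.
- exact: comm_equiv_inv.
- exact: braid_equiv_inv.
Qed.
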